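(* Let $n$ be an even integer and $m$ an integer with $\frac n4<m<\frac n3$. Let $x\in\{0,1\}^n$ and let $\ell=|\{j\in[1..2m+2]\mid x_j=1\}|$ be the number of ones among the first $2m+2$ positions of $x$, and suppose $1\le\ell\le 2m+1$. Then for any unary unbiased variation operator $V$, $\Pr[\mathrm{LO}(V(x))\ge 2m+2]\le\frac2n$.
   Context: $\mathrm{LO}(x)=\sum_{r=1}^n\prod_{s=1}^r x_s$ is the number of leading ones of $x\in\{0,1\}^n$. A unary unbiased variation operator $V$ assigns to each $x\in\{0,1\}^n$ a probability distribution $V(x)$ on $\{0,1\}^n$ such that for all $x,y,z$, $\Pr[y=V(x)]=\Pr[y\oplus z=V(x\oplus z)]$, and for all permutations $\sigma$ of $[1..n]$, $\Pr[y=V(x)]=\Pr[\sigma(y)=V(\sigma(x))]$, where $\sigma(x)=(x_{\sigma(1)},\dots,x_{\sigma(n)})$. *)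

(* Defs.v *)
From HB Require Import structures.
From mathcomp Require Import all_boot all_order all_algebra all_fingroup.
Set Implicit Arguments. Unset Strict Implicit. Unset Printing Implicit Defensive.
Import Order.TTheory GRing.Theory Num.Theory.

(* Bit strings of length n: positions are 0-indexed ('I_n), i.e. position j
   of the paper (1..n) is index j-1 here. *)
Definition bits (n : nat) := {ffun 'I_n -> bool}.

Definition LO (n : nat) (x : bits n) : nat :=
  \sum_(r < n) \prod_(s < n | s <= r) (x s : nat).

Definition bxor (n : nat) (x z : bits n) : bits n := [ffun i => x i (+) z i].

Definition bperm (n : nat) (s : {perm 'I_n}) (x : bits n) : bits n :=
  [ffun i => x (s i)].

(* A unary variation operator: V x y = Pr[y = V(x)], a probability
   distribution on bits n for each x. *)
Definition is_variation_op (R : numDomainType) (n : nat) (V : bits n -> bits n -> R) :=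
  forall x : bits n, (forall y, 0 <= V x y)%R /\ (\sum_(y : bits n) V x y = 1)%R.

Definition is_unbiased (R : numDomainType) (n : nat) (V : bits n -> bits n -> R) :=
  (forall x y z : bits n, V x y = V (bxor x z) (bxor y z)) /\
  (forall (s : {perm 'I_n}) (x y : bits n), V x y = V (bperm s x) (bperm s y)).

Definition ones_prefix (n k : nat) (x : bits n) : nat :=
  #|[set j : 'I_n | (j < k) && x j]|.

(* Main.v *)
Require Import Defs.
From HB Require Import structures.
From mathcomp Require Import all_boot all_order all_algebra all_fingroup.
Import Order.TTheory GRing.Theory Num.Theory.
From mathcomp Require Import zify.
Set Implicit Arguments. Unset Strict Implicit.

Lemma card_lt_set n t : t <= n -> #|[set j : 'I_n | j < t]| = t.
Proof.
move=> H.
have -> : [set j : 'I_n | j < t] = widen_ord H @: [set: 'I_t].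
  apply/setP => j; rewrite !inE; apply/idP/imsetP.
    by move=> jt; exists (Ordinal jt); rewrite ?inE //; apply: val_inj.
  by case=> i _ ->; rewrite /= ltn_ord.
rewrite card_imset ?cardsT ?card_ord //.
by move=> a b /(congr1 val) /= /val_inj.
Qed.

Lemma LO_prefix n (y : bits n) k (t : 'I_n) : k <= LO y -> t < k -> y t.
Proof.
move=> hk tk; apply/negPn/negP => yt.
have : LO y <= t.
  rewrite /LO (bigID (fun r : 'I_n => r < t)) /= [X in _ + X]big1 ?addn0; last first.
    move=> r rt; rewrite (bigD1 t) /=; last by rewrite leqNgt.
    by rewrite (negbTE yt).
  apply: (@leq_trans (\sum_(r < n | r < t) 1)).
    apply: leq_sum => r _; apply: (big_ind (fun v => v <= 1)) => //.
      by move=> a b; case: a => [|[|]] //; case: b => [|[|]].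
    by move=> s _; case: (y s).
  rewrite sum1_card -[X in _ <= X](@card_lt_set n t (ltnW (ltn_ord t))).
  by rewrite leq_eqVlt; apply/orP; left; apply/eqP; apply: eq_card => r; rewrite inE.
lia.
Qed.

Definition Tp n k (y : bits n) := [forall t : 'I_n, (t < k) ==> y t].
Definition hsw n (i j : 'I_n) (y : bits n) : bits n :=
  [ffun t => if t == i then ~~ y j else if t == j then ~~ y i else y t].

Lemma hsw_invol n (i j : 'I_n) y : i != j -> hsw i j (hsw i j y) = y.
Proof.
move=> ij; apply/ffunP => t; rewrite !ffunE.
have ji : (j == i) = false by rewrite eq_sym; apply/negbTE.
case: eqP => [->|_]; first by rewrite ji eqxx negbK.
by case: eqP => [->|_]; rewrite ?eqxx ?negbK.
Qed.

Lemma hsw_V (R : numDomainType) n (V : bits n -> bits n -> R) (x : bits n) (i j : 'I_n) (y : bits n) :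
  is_unbiased V -> x i = false -> x j = true -> V x (hsw i j y) = V x y.
Proof.
case=> Vx Vp xi xj.
have ij : i != j by apply/eqP => e; move: xi; rewrite e xj.
set z0 : bits n := [ffun _ => false].
set s := tperm i j.
set w := bxor y x.
have e1 : bxor x x = z0 by apply/ffunP => t; rewrite !ffunE addbb.
have e2 : bperm s z0 = z0 by apply/ffunP => t; rewrite !ffunE.
have e3 : bxor z0 x = x by apply/ffunP => t; rewrite !ffunE.
have e4 : bxor (bperm s w) x = hsw i j y.
  apply/ffunP => t; rewrite !ffunE /s.
  case: (tpermP i j t) => [->|->|ti tj].
  - by rewrite eqxx xi xj /=; case: (y j).
  - by rewrite eq_sym (negbTE ij) eqxx xi xj /=; case: (y i).
  - by move/eqP: ti => /negbTE ->; move/eqP: tj => /negbTE ->; rewrite -addbA addbb addbF.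
have e5 : bxor w x = y by apply/ffunP => t; rewrite !ffunE -addbA addbb addbF.
rewrite (Vx x y x) e1 (Vp s z0 w) e2 (Vx z0 _ x) e3 e4.
done.
Qed.

Lemma hsw_T n k (i j : 'I_n) y : i < k -> j < k -> i != j ->
  Tp k (hsw i j y) -> forall t : 'I_n, t < k -> y t = (t != i) && (t != j).
Proof.
move=> ik jk ij /forallP H t tk.
have Hi := implyP (H i) ik; have Hj := implyP (H j) jk; have Ht := implyP (H t) tk.
rewrite /hsw !ffunE eqxx in Hi; rewrite /hsw !ffunE eq_sym (negbTE ij) eqxx in Hj.
rewrite /hsw !ffunE in Ht.
case: (eqVneq t i) Ht => [->|ti] Ht; first by rewrite /=; apply/negbTE.
case: (eqVneq t j) Ht => [->|tj] Ht; first by rewrite andbF; apply/negbTE.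
by rewrite Ht.
Qed.

Local Open Scope ring_scope.
Lemma sum_ind (R : numDomainType) (T : finType) (P : pred T) (F : T -> R) :
  \sum_(y | P y) F y = \sum_y (P y : nat)%:R * F y.
Proof.
rewrite big_mkcond; apply: eq_bigr => y _; case: (P y) => /=.
  by rewrite mul1r. by rewrite mul0r.
Qed.

Lemma mulW (R : numDomainType) (z a b : R) : 0 <= z -> a <= b -> z * a <= z * b.
Proof. by move=> h; apply: ler_wpM2l. Qed.
Lemma mulWr (R : numDomainType) (z a b : R) : 0 <= z -> a <= b -> a * z <= b * z.
Proof. by move=> h; apply: ler_wpM2r. Qed.

Local Close Scope ring_scope.
Unset Implicit Arguments.

Theorem lemma14 (R : realFieldType) (n m : nat)
  (V : bits n -> bits n -> R) (x : bits n) :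
  ~~ odd n -> n < 4 * m -> 3 * m < n ->
  1 <= ones_prefix (2 * m + 2) x <= 2 * m + 1 ->
  is_variation_op V -> is_unbiased V ->
  (\sum_(y : bits n | (2 * m + 2 <= LO y)%N) V x y <= 2%:R / n%:R)%R.
Proof.
move=> ev hn4 hn3 /andP[l1 l2] Vop Vub.
set k := 2 * m + 2 in l1 l2 *.
have kn : k <= n by rewrite /k; lia.
have nk : n <= 2 * k by rewrite /k; lia.
have n0 : 0 < n by lia.
set A := [set i : 'I_n | (i < k) && ~~ x i].
set B := [set j : 'I_n | (j < k) && x j].
have cB : #|B| = ones_prefix k x by [].
have cAB : #|A| + #|B| = k.
  rewrite -(card_lt_set kn) -(cardsID [set j : 'I_n | x j] [set j : 'I_n | j < k]) addnC.
  have -> : A = [set j : 'I_n | j < k] :\: [set j : 'I_n | x j] by apply/setP => j; rewrite !inE andbC.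
  have -> : B = [set j : 'I_n | j < k] :&: [set j : 'I_n | x j] by apply/setP => j; rewrite !inE.
  by [].

set Pairs := setX A B.
have Pinv : forall i j, (i, j) \in Pairs -> [/\ i < k, x i = false, j < k, x j = true & i != j].
  move=> i j; rewrite !inE /= => /andP[/andP[ik xi] /andP[jk xj]].
  split => //; first exact: negbTE.
  by apply/eqP => e; move: xi; rewrite e xj.
set PT := (\sum_(y | Tp k y) V x y)%R.
have hP : forall p, p \in Pairs -> PT = (\sum_(y | Tp k (hsw p.1 p.2 y)) V x y)%R.
  move=> [i j] /Pinv [ik xi jk xj ij] /=.
  rewrite /PT (reindex_inj (h := hsw i j)) /=; last first.
    by apply: (can_inj (g := hsw i j)) => y; apply: hsw_invol.
  by apply: eq_bigr => y _; apply: hsw_V.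
have hcount : forall y, (Tp k y : nat) + \sum_(p in Pairs) (Tp k (hsw p.1 p.2 y) : nat) <= 1.
  move=> y.
  case Ty: (Tp k y).
    rewrite big1 // => [[i j]] /Pinv [ik xi jk xj ij] /=.
    case H: (Tp k _) => //.
    have := hsw_T ik jk ij H ik; rewrite eqxx /=.
    by move/forallP: Ty => /(_ i) /implyP /(_ ik) ->.
  case: (pickP (fun p => (p \in Pairs) && Tp k (hsw p.1 p.2 y))) => [[i j] /andP[p0P T0] | none].
    rewrite (bigD1 (i, j)) //= T0 big1 //.
    move=> [i' j'] /andP[qP qp0] /=.
    case Hq: (Tp k _) => //; exfalso.
    have [ik xi jk xj ij] := Pinv _ _ p0P.
    have [ik' xi' jk' xj' ij'] := Pinv _ _ qP.
    have E1 := hsw_T ik jk ij T0.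
    have E2 := hsw_T ik' jk' ij' Hq.
    have ij'' : i != j' by apply/eqP => e; move: xi; rewrite e xj'.
    have ji' : j != i' by apply/eqP => e; move: xj; rewrite e xi'.
    case: (eqVneq i i') => [ei|nei].
      case: (eqVneq j j') => [ej|nej].
        by move: qp0; rewrite ei ej eqxx.
      have := E1 j jk; rewrite E2 // eqxx andbF ji' nej /=.
      by [].
    have := E1 i ik; rewrite E2 // eqxx /= nei ij'' /=.
    by [].
  rewrite add0n big1 // => q qP; have := none q; rewrite qP /=.
  by case: (Tp k _).
have key : (PT *+ (1 + #|Pairs|) <= 1)%R.
  rewrite add1n mulrS -sumr_const (eq_bigr _ hP).
  rewrite /PT sum_ind; under eq_bigr do rewrite sum_ind.
  rewrite exchange_big -big_split /=.
  apply: (@le_trans _ _ (\sum_y V x y)%R); last by rewrite (proj2 (Vop x)).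
  apply: ler_sum => y _.
  rewrite -mulr_suml -mulrDl -natr_sum -natrD.
  apply: ler_piMl; first by case: (Vop x) => H _; apply: H.
  by rewrite (ler_nat R _ 1) hcount.
have PT0 : (0 <= PT)%R by apply: sumr_ge0 => y _; case: (Vop x) => H _; apply: H.
have kle : k <= 1 + #|Pairs| by rewrite cardsX; nia.
have PTk : (PT * k%:R <= 1)%R.
  apply: le_trans key; rewrite -[X in (_ <= X)%R]mulr_natr; apply: (mulW PT0).
  by rewrite ler_nat.
apply: (@le_trans _ _ PT).
  rewrite /PT sum_ind [X in (_ <= X)%R]sum_ind; apply: ler_sum => y _.
  apply: mulWr; first by case: (Vop x) => H _; apply: H.
  rewrite ler_nat; case H: (k <= LO y) => //=.
  have -> : Tp k y by apply/forallP => t; apply/implyP; exact: LO_prefix H.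
  by [].
rewrite ler_pdivlMr ?ltr0n //.
apply: (@le_trans _ _ (PT * (2 * k)%:R)%R).
  by apply: (mulW PT0); rewrite ler_nat.
rewrite natrM mulrCA -[X in (_ <= X)%R]mulr1.
by apply: mulW.
Qed.
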